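(* In the linear setting of the context, for all $\lambda>0$, $\sigma\in(0,1)$ and $\theta\ge0$, there exists $\tau>0$ such that for all initial conditions $x(0)\in\mathbb{R}^n$ the execution times generated by the dynamic event generator satisfy $t_{i+1}-t_i\ge\tau$ for all $i\in\mathbb I$. Moreover $x(t)\to0$ and $\eta(t)\to0$ as $t\to\infty$. If in addition $\lambda=(1-\sigma)\kappa$, then for all $t\ge0$, $V(x(t))\le V(x(0))e^{(\sigma-1)\kappa t}$.
   Context: Consider $\dot x=Ax+Bu$, $x\in\mathbb{R}^n$, $u\in\mathbb{R}^m$, and a gain $K$ such that $A+BK$ is Hurwitz; let $P,Q$ be symmetric positive definite with $(A+BK)^\top P+P(A+BK)=-Q$, $V(x)=x^\top Px$, and let $\kappa>0$ be such that $Q\ge\kappa P$. The input is $u(t)=Kx(t_i)$ for $t\in[t_i,t_{i+1})$, with $e(t)=x(t_i)-x(t)$, so $\dot x=Ax+BK(x+e)$. If infinitely many executions, $\mathbb I=\mathbb N$; otherwise $\mathbb I=\{0,\dots,I\}$. $g(t^-)$ is the left limit. Dynamic event generator with parameters $\sigma\in(0,1)$, $\lambda>0$, $\theta\ge0$: $\dot\eta=-\lambda\eta+\sigma x^\top Qx-2x^\top PBKe$, $\eta(0)=0$; $t_0=0$, $t_{i+1}=\inf\{t>t_i:\ \eta(t)+\theta(\sigma x(t)^\top Qx(t)-2x(t)^\top PBKe(t^-))\le0\}$. Assume $x(t_i)\ne0$ for all $i$. *)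

(* Defs.v *)
From Stdlib Require Import Reals Lra.
Open Scope R_scope.

(* Vectors of R^n are represented as functions nat -> R, of which only the
   entries with index < n are meaningful; matrices as nat -> nat -> R. *)
Definition vec := nat -> R.
Definition mat := nat -> nat -> R.

Fixpoint sumR (n : nat) (f : nat -> R) : R :=
  match n with
  | O => 0
  | S k => sumR k f + f k
  end.

Definition dot (n : nat) (u v : vec) : R := sumR n (fun k => u k * v k).
Definition mv (k : nat) (M : mat) (v : vec) : vec :=
  fun i => sumR k (fun j => M i j * v j).
Definition mm (k : nat) (M N : mat) : mat :=
  fun i j => sumR k (fun l => M i l * N l j).
Definition madd (M N : mat) : mat := fun i j => M i j + N i j.
Definition trans (M : mat) : mat := fun i j => M j i.
Definition vadd (u v : vec) : vec := fun k => u k + v k.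
Definition vsub (u v : vec) : vec := fun k => u k - v k.

Definition quad (n : nat) (M : mat) (v : vec) : R := dot n v (mv n M v).

Definition vnonzero (n : nat) (v : vec) : Prop := exists k, (k < n)%nat /\ v k <> 0.

Definition sym (n : nat) (M : mat) : Prop :=
  forall i j, (i < n)%nat -> (j < n)%nat -> M i j = M j i.

Definition pos_def (n : nat) (M : mat) : Prop :=
  forall v, vnonzero n v -> 0 < quad n M v.

(* Hurwitz: every (complex) eigenvalue a + i b of M has negative real part.
   A complex eigenvector u + i w is written in real coordinates:
   M (u + i w) = (a + i b)(u + i w). *)
Definition hurwitz (n : nat) (M : mat) : Prop :=
  forall (a b : R) (u w : vec),
    (exists k, (k < n)%nat /\ (u k <> 0 \/ w k <> 0)) ->
    (forall k, (k < n)%nat ->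
        mv n M u k = a * u k - b * w k /\ mv n M w k = b * u k + a * w k) ->
    a < 0.

(* Index set I: Ifin = None means infinitely many executions (I = N),
   Ifin = Some N means I = {0,...,N}. *)
Definition inI (Ifin : option nat) (i : nat) : Prop :=
  match Ifin with None => True | Some N => (i <= N)%nat end.

Definition is_glb (S : R -> Prop) (b : R) : Prop :=
  (forall s, S s -> b <= s) /\ (forall c, (forall s, S s -> c <= s) -> c <= b).

Definition vec_deriv (n : nat) (f : R -> vec) (t : R) (d : vec) : Prop :=
  forall k, (k < n)%nat -> derivable_pt_lim (fun s => f s k) t (d k).

(* The triggering function on the i-th inter-event interval, evaluated along the
   flow (z,zeta) with held input K x(t_i):
   eta(t) + theta (sigma x^T Q x - 2 x^T P B K e(t^-)),  e(t^-) = x(t_i) - x(t). *)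
Definition trig (n m : nat) (P Q B K : mat) (sigma theta : R)
    (xi : vec) (zt : vec) (et : R) : R :=
  et + theta * (sigma * quad n Q zt
                - 2 * dot n zt (mv n P (mv m B (mv n K (vsub xi zt))))).

(* (x, eta, t, Ifin) is a solution of the closed loop with the dynamic event
   generator.  z i and zeta i are the flows of the closed loop with input held
   at K x(t_i) (and eta-dynamics with e = x(t_i) - x), started at time t_i from
   (x(t_i), eta(t_i)); the solution follows them on [t_i, t_{i+1}]
   (on [t_i, oo) for the last index), and t_{i+1} is the infimum of the
   triggering set computed along these flows. *)
Definition is_execution (n m : nat) (A B K P Q : mat) (lam sigma theta : R)
    (x : R -> vec) (eta : R -> R) (t : nat -> R) (Ifin : option nat)
    (z : nat -> R -> vec) (zeta : nat -> R -> R) : Prop :=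
  t 0%nat = 0 /\ eta 0 = 0 /\
  (forall i, inI Ifin i ->
     z i (t i) = x (t i) /\ zeta i (t i) = eta (t i) /\
     (forall s, vec_deriv n (z i) s
                  (vadd (mv n A (z i s)) (mv m B (mv n K (x (t i)))))) /\
     (forall s, derivable_pt_lim (zeta i) s
                  (- lam * zeta i s + sigma * quad n Q (z i s)
                   - 2 * dot n (z i s)
                           (mv n P (mv m B (mv n K (vsub (x (t i)) (z i s)))))))) /\
  (forall i, inI Ifin i -> inI Ifin (S i) ->
     is_glb (fun s => t i < s /\
               trig n m P Q B K sigma theta (x (t i)) (z i s) (zeta i s) <= 0)
            (t (S i)) /\
     (forall s, t i <= s <= t (S i) -> x s = z i s /\ eta s = zeta i s)) /\
  (forall i, inI Ifin i -> ~ inI Ifin (S i) ->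
     (forall s, t i < s ->
        ~ (trig n m P Q B K sigma theta (x (t i)) (z i s) (zeta i s) <= 0)) /\
     (forall s, t i <= s -> x s = z i s /\ eta s = zeta i s)).

Definition tends_to_0 (f : R -> R) : Prop :=
  forall eps, 0 < eps -> exists T, forall s, T <= s -> Rabs (f s) < eps.

(* Main.v *)
Require Import Defs.
From Stdlib Require Import Reals Lra Lia Psatz Classical.
Open Scope R_scope.

Lemma sumR_ext n f g : (forall k, (k < n)%nat -> f k = g k) -> sumR n f = sumR n g.
Proof. induction n; simpl; intros H; [reflexivity|].
rewrite IHn by (intros; apply H; lia). rewrite H by lia. reflexivity. Qed.

Lemma sumR_plus n f g : sumR n (fun k => f k + g k) = sumR n f + sumR n g.
Proof. induction n; simpl; [lra|]. rewrite IHn; lra. Qed.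

Lemma sumR_minus n f g : sumR n (fun k => f k - g k) = sumR n f - sumR n g.
Proof. induction n; simpl; [lra|]. rewrite IHn; lra. Qed.

Lemma sumR_scal n c f : sumR n (fun k => c * f k) = c * sumR n f.
Proof. induction n; simpl; [lra|]. rewrite IHn; lra. Qed.

Lemma sumR_zero n : sumR n (fun _ => 0) = 0.
Proof. induction n; simpl; [lra|]. rewrite IHn; lra. Qed.

Lemma sumR_swap n m f : sumR n (fun i => sumR m (fun j => f i j)) = sumR m (fun j => sumR n (fun i => f i j)).
Proof. induction n; simpl. rewrite sumR_zero; reflexivity.
rewrite IHn, <- sumR_plus. reflexivity. Qed.

Lemma sumR_le n f g : (forall k, (k<n)%nat -> f k <= g k) -> sumR n f <= sumR n g.
Proof. induction n; simpl; intros H; [lra|].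
assert (sumR n f <= sumR n g) by (apply IHn; intros; apply H; lia).
assert (f n <= g n) by (apply H; lia). lra. Qed.

Lemma sumR_nonneg n f : (forall k, (k<n)%nat -> 0 <= f k) -> 0 <= sumR n f.
Proof. intros H. rewrite <- (sumR_zero n). apply sumR_le; auto. Qed.

Lemma sumR_term n f k : (forall j, (j<n)%nat -> 0 <= f j) -> (k<n)%nat -> f k <= sumR n f.
Proof. induction n; simpl; intros H Hk; [lia|].
assert (0 <= sumR n f) by (apply sumR_nonneg; intros; apply H; lia).
destruct (Nat.eq_dec k n) as [->|Hne]. lra.
assert (f k <= sumR n f) by (apply IHn; [intros; apply H; lia | lia]).
assert (0 <= f n) by (apply H; lia). lra. Qed.

Lemma CS_step S A B x y : 0 <= A -> 0 <= B -> S^2 <= A*B ->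
  (S + x*y)^2 <= (A + x^2)*(B + y^2).
Proof. intros HA HB H.
assert (2*S*x*y <= A*y^2 + x^2*B).
{ assert (HAy: 0 <= A*y^2) by (apply Rmult_le_pos; nra).
  assert (HBx: 0 <= x^2*B) by (apply Rmult_le_pos; nra).
  destruct (Rle_dec (S*x*y) 0). lra.
  assert (Hsq: (2*S*x*y)^2 <= (A*y^2 + x^2*B)^2).
  { assert (4*S^2*(x^2*y^2) <= 4*(A*B)*(x^2*y^2)) by (apply Rmult_le_compat_r; nra).
    assert (0 <= (A*y^2 - x^2*B)^2) by apply pow2_ge_0.
    assert ((2*S*x*y)^2 = 4*S^2*(x^2*y^2)) by ring.
    assert ((A*y^2 + x^2*B)^2 = (A*y^2 - x^2*B)^2 + 4*(A*B)*(x^2*y^2)) by ring.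
    lra. }
  destruct (Rle_dec (2*S*x*y) (A*y^2 + x^2*B)); auto.
  exfalso. assert (A*y^2 + x^2*B < 2*S*x*y) by lra.
  assert ((A*y^2 + x^2*B)^2 < (2*S*x*y)^2) by (nra).
  lra. }
assert ((S + x*y)^2 = S^2 + 2*S*x*y + x^2*y^2) by ring.
assert ((A + x^2)*(B + y^2) = A*B + (A*y^2 + x^2*B) + x^2*y^2) by ring.
lra. Qed.

Lemma CS n a b : (sumR n (fun k => a k * b k))^2 <= sumR n (fun k => a k ^2) * sumR n (fun k => b k ^2).
Proof. induction n; simpl. lra.
apply CS_step; auto; apply sumR_nonneg; intros; nra. Qed.

Definition nrm (n : nat) (v : vec) : R := dot n v v.

Lemma mv_ext k M u v i : (forall j, (j<k)%nat -> u j = v j) -> mv k M u i = mv k M v i.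
Proof. intros H; unfold mv; apply sumR_ext; intros j Hj; rewrite H; auto. Qed.

Lemma dot_ext n u v u' v' : (forall j, (j<n)%nat -> u j = u' j /\ v j = v' j) ->
  dot n u v = dot n u' v'.
Proof. intros H; unfold dot; apply sumR_ext; intros j Hj; destruct (H j Hj) as [-> ->]; auto. Qed.

Lemma dot_comm n u v : dot n u v = dot n v u.
Proof. unfold dot; apply sumR_ext; intros; ring. Qed.

Lemma mv_lin k M u v a b i : mv k M (fun j => a * u j + b * v j) i = a * mv k M u i + b * mv k M v i.
Proof. unfold mv. rewrite <- !sumR_scal, <- sumR_plus. apply sumR_ext; intros; ring. Qed.

Lemma dot_lin2 n w u v a b : dot n w (fun j => a * u j + b * v j) = a * dot n w u + b * dot n w v.
Proof. unfold dot. rewrite <- !sumR_scal, <- sumR_plus. apply sumR_ext; intros; ring. Qed.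

Lemma dot_sym_mv n P u w : sym n P -> dot n u (mv n P w) = dot n w (mv n P u).
Proof. intros HP. unfold dot, mv.
transitivity (sumR n (fun i => sumR n (fun j => u i * P i j * w j))).
{ apply sumR_ext; intros. rewrite <- sumR_scal. apply sumR_ext; intros; ring. }
rewrite sumR_swap. apply sumR_ext; intros j Hj. rewrite <- sumR_scal. apply sumR_ext; intros i Hi.
rewrite (HP i j) by auto. ring. Qed.

Lemma mv_mm k k' M N v i : mv k (mm k' M N) v i = mv k' M (mv k N v) i.
Proof. unfold mv, mm.
transitivity (sumR k (fun j => sumR k' (fun l => M i l * N l j * v j))).
{ apply sumR_ext; intros. rewrite (Rmult_comm _ (v k0)), <- sumR_scal. apply sumR_ext; intros; ring. }
rewrite sumR_swap. apply sumR_ext; intros l Hl. rewrite <- sumR_scal. apply sumR_ext; intros; ring. Qed.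

Lemma dot_trans n k v M w : dot n v (mv k (trans M) w) = dot k w (mv n M v).
Proof. unfold dot, mv, trans.
transitivity (sumR n (fun i => sumR k (fun l => v i * M l i * w l))).
{ apply sumR_ext; intros. rewrite <- sumR_scal. apply sumR_ext; intros; ring. }
rewrite sumR_swap. apply sumR_ext; intros l Hl. rewrite <- sumR_scal. apply sumR_ext; intros; ring. Qed.

Lemma nrm_nonneg n v : 0 <= nrm n v.
Proof. unfold nrm, dot. apply sumR_nonneg; intros; nra. Qed.

Lemma nrm_term n v k : (k<n)%nat -> v k ^2 <= nrm n v.
Proof. intros Hk. unfold nrm, dot.
pose proof (sumR_term n (fun j => v j * v j) k) as H. simpl in H.
assert (v k * v k <= sumR n (fun j => v j * v j)) by (apply H; auto; intros; nra).
nra. Qed.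

Lemma nrm_pos n v : vnonzero n v -> 0 < nrm n v.
Proof. intros [k [Hk Hv]]. pose proof (nrm_term n v k Hk).
assert (0 < v k ^2) by (nra). lra. Qed.

Lemma dot2_le n u w d : 0 < d -> 2 * dot n u w <= d * nrm n u + nrm n w / d.
Proof. intros Hd. unfold nrm, dot. rewrite <- sumR_scal.
unfold Rdiv. rewrite (Rmult_comm _ (/d)), <- sumR_scal, <- sumR_scal, <- sumR_plus. idtac.
apply sumR_le; intros j _.
assert (0 <= d * (u j - w j / d)^2) by (apply Rmult_le_pos; [lra | apply pow2_ge_0]).
assert (d * (u j - w j / d)^2 = d * (u j * u j) + / d * (w j * w j) - 2 * (u j * w j)) by (field; lra).
lra. Qed.

Lemma nrm_add n y u w : (forall j, (j<n)%nat -> y j = u j + w j) ->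
  nrm n y <= 2 * nrm n u + 2 * nrm n w.
Proof. intros H. unfold nrm, dot. rewrite <- !sumR_scal, <- sumR_plus.
apply sumR_le; intros j Hj. cbv beta. rewrite H by auto. assert (0 <= (u j - w j)^2) by apply pow2_ge_0. lra. Qed.

Lemma mv_bound k l M : exists C, 0 <= C /\ forall v, nrm l (mv k M v) <= C * nrm k v.
Proof. exists (sumR l (fun i => sumR k (fun j => M i j ^2))). split.
{ apply sumR_nonneg; intros; apply sumR_nonneg; intros; nra. }
intros v. unfold nrm at 1. unfold dot.
rewrite Rmult_comm, <- sumR_scal. apply sumR_le; intros i Hi.
pose proof (CS k (fun j => M i j) v). unfold mv.
unfold nrm, dot. replace (sumR k (fun j => v j * v j)) with (sumR k (fun j => v j ^2))
  by (apply sumR_ext; intros; ring). nra. Qed.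

Lemma quad_S n P v : sym (S n) P ->
  quad (S n) P v = quad n P v + 2 * v n * mv n P v n + P n n * (v n)^2.
Proof. intros HP. unfold quad, dot. simpl.
assert (E1: sumR n (fun i => v i * mv (S n) P v i) =
            sumR n (fun i => v i * mv n P v i) + v n * mv n P v n).
{ unfold mv. simpl. transitivity (sumR n (fun i => v i * sumR n (fun j => P i j * v j)) +
     sumR n (fun i => v n * (P n i * v i))).
  rewrite <- sumR_plus. apply sumR_ext; intros i Hi. rewrite (HP i n) by lia. ring.
  rewrite sumR_scal. reflexivity. }
rewrite E1. assert (mv (S n) P v n = mv n P v n + P n n * v n) by reflexivity.
rewrite H. ring. Qed.

Lemma quad_ext n M u v : (forall j, (j<n)%nat -> u j = v j) -> quad n M u = quad n M v.
Proof. intros H. unfold quad. apply dot_ext. intros j Hj. split; auto. apply mv_ext; auto. Qed.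

Lemma quad_zero n M : quad n M (fun _ => 0) = 0.
Proof. unfold quad, dot. transitivity (sumR n (fun _ => 0)). apply sumR_ext; intros; ring.
apply sumR_zero. Qed.

Lemma coercive n : forall P, sym n P -> pos_def n P ->
  exists mu, 0 < mu /\ forall v, mu * nrm n v <= quad n P v.
Proof. induction n; intros P HP Hpd.
{ exists 1. split. lra. intros v. unfold nrm, quad, dot; simpl. lra. }
set (p := P n n).
assert (Hp: 0 < p).
{ pose (e := fun k => if Nat.eqb k n then 1 else 0).
  assert (H1: vnonzero (S n) e) by (exists n; split; [lia|]; unfold e; rewrite Nat.eqb_refl; lra).
  pose proof (Hpd e H1) as H2. rewrite quad_S in H2 by auto.
  rewrite (quad_ext n P e (fun _ => 0)) in H2.
  2:{ intros j Hj. unfold e. destruct (Nat.eqb_spec j n); [lia|auto]. }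
  rewrite quad_zero in H2. rewrite (mv_ext n P e (fun _ => 0)) in H2.
  2:{ intros j Hj. unfold e. destruct (Nat.eqb_spec j n); [lia|auto]. }
  unfold e in H2. rewrite Nat.eqb_refl in H2. unfold mv in H2.
  rewrite (sumR_ext n _ (fun _ => 0)) in H2 by (intros; ring). rewrite sumR_zero in H2.
  unfold p. lra. }
set (P' := fun i j => P i j - P i n * P n j / p).
assert (Hsym': sym n P').
{ intros i j Hi Hj. unfold P'. rewrite (HP i j), (HP i n), (HP n j) by lia. unfold Rdiv. ring. }
assert (Hexp: forall v, quad (S n) P v = quad n P' v + p * (v n + mv n P v n / p)^2).
{ intros v. rewrite quad_S by auto.
  assert (quad n P' v = quad n P v - mv n P v n * mv n P v n / p).
  { unfold quad, dot, mv, P'.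
    transitivity (sumR n (fun i => v i * sumR n (fun j => P i j * v j)) -
                  sumR n (fun i => (mv n P v n / p) * (P n i * v i))).
    2:{ rewrite sumR_scal. unfold mv. field. lra. }
    rewrite <- sumR_minus. apply sumR_ext; intros i Hi.
    assert (Hin: sumR n (fun j => (P i j - P i n * P n j / p) * v j) =
       sumR n (fun j => P i j * v j) - (P i n / p) * sumR n (fun j => P n j * v j)).
    { rewrite <- sumR_scal, <- sumR_minus. apply sumR_ext; intros; unfold Rdiv; ring. }
    rewrite Hin. unfold mv. rewrite (HP n i) by lia. unfold Rdiv. ring. }
  rewrite H. unfold p. field. unfold p in Hp; lra. }
assert (Hpd': pos_def n P').
{ intros v' Hv'.
  pose (v := fun k => if Nat.eqb k n then - (mv n P v' n) / p else v' k).
  assert (Hvv: forall j, (j<n)%nat -> v j = v' j).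
  { intros j Hj. unfold v. destruct (Nat.eqb_spec j n); [lia|auto]. }
  assert (Hnz: vnonzero (S n) v).
  { destruct Hv' as [k [Hk Hvk]]. exists k. split. lia. rewrite Hvv; auto. }
  pose proof (Hpd v Hnz) as H. rewrite Hexp in H.
  rewrite (mv_ext n P v v') in H by auto. rewrite (quad_ext n P' v v') in H by auto.
  unfold v in H. rewrite Nat.eqb_refl in H.
  replace (- mv n P v' n / p + mv n P v' n / p) with 0 in H by (field; lra).
  lra. }
destruct (IHn P' Hsym' Hpd') as [mu' [Hmu' Hc]].
set (Sn := sumR n (fun j => P n j ^2)).
assert (HSn: 0 <= Sn) by (apply sumR_nonneg; intros; nra).
set (mu := Rmin (mu' / (1 + 2 * Sn / (p*p))) (p/2)).
assert (Hq: 0 < 1 + 2 * Sn / (p*p)).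
{ assert (0 <= 2 * Sn / (p*p)). { apply Rmult_le_pos; [lra|]. apply Rlt_le, Rinv_0_lt_compat; nra. } lra. }
assert (Hmu1: mu <= mu' / (1 + 2 * Sn / (p*p))) by apply Rmin_l.
assert (Hmu2: mu <= p/2) by apply Rmin_r.
assert (Hmu0: 0 < mu).
{ unfold mu. apply Rmin_glb_lt. apply Rdiv_lt_0_compat; lra. lra. }
exists mu. split. auto. intros v.
rewrite Hexp. pose proof (Hc v) as Hcv.
set (s := mv n P v n). set (w := v n + s / p). set (N := nrm n v).
assert (HN: 0 <= N) by apply nrm_nonneg.
assert (Hs: s^2 <= Sn * N).
{ pose proof (CS n (fun j => P n j) v) as H. unfold s, mv, Sn, N, nrm, dot.
  replace (sumR n (fun j => v j * v j)) with (sumR n (fun j => v j ^2)) by (apply sumR_ext; intros; ring).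
  exact H. }
assert (HnS: nrm (S n) v = N + v n ^2) by (unfold N, nrm, dot; simpl; ring).
rewrite HnS.
assert (Hvn: v n ^2 <= 2 * w^2 + 2 * (s^2 / (p*p))).
{ assert (v n = w - s/p) by (unfold w; field; lra). rewrite H.
  assert (0 <= (w + s/p)^2) by apply pow2_ge_0.
  replace (s^2/(p*p)) with ((s/p)^2) by (field; lra). nra. }
assert (Hs2: s^2 / (p*p) <= Sn / (p*p) * N).
{ unfold Rdiv. rewrite (Rmult_comm Sn), Rmult_assoc. rewrite (Rmult_comm (/(p*p))).
  apply Rmult_le_compat_r. apply Rlt_le, Rinv_0_lt_compat; nra. lra. }
assert (Hm1: mu * (1 + 2 * Sn / (p*p)) <= mu').
{ apply (Rmult_le_compat_r (1 + 2 * Sn / (p*p))) in Hmu1; [|lra].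
  replace (mu' / (1 + 2 * Sn / (p * p)) * (1 + 2 * Sn / (p * p))) with mu' in Hmu1 by (field; split; nra).
  lra. }
assert (mu * v n ^2 <= mu * (2 * w^2) + mu * (2 * (Sn / (p*p) * N))).
{ rewrite <- Rmult_plus_distr_l. apply Rmult_le_compat_l; lra. }
assert (mu * (2 * w^2) <= p * w^2) by (assert (0 <= w^2) by apply pow2_ge_0; nra).
assert (mu * N + mu * (2 * (Sn / (p*p) * N)) = mu * (1 + 2 * Sn / (p*p)) * N) by (field; lra).
assert (mu * (1 + 2 * Sn / (p*p)) * N <= mu' * N) by (apply Rmult_le_compat_r; lra).
change (nrm n v) with N in Hcv. lra. Qed.

Lemma sumR_derive n (f : nat -> R -> R) (d : nat -> R) t :
  (forall k, (k<n)%nat -> derivable_pt_lim (f k) t (d k)) ->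
  derivable_pt_lim (fun s => sumR n (fun k => f k s)) t (sumR n d).
Proof. induction n; simpl; intros H.
- apply derivable_pt_lim_const.
- apply (derivable_pt_lim_plus (fun s => sumR n (fun k => f k s)) (f n)).
  apply IHn; intros; apply H; lia. apply H; lia. Qed.

Lemma mv_deriv k l M u s du : vec_deriv k u s du ->
  vec_deriv l (fun r => mv k M (u r)) s (mv k M du).
Proof. intros H i _. unfold mv.
apply (sumR_derive k (fun j r => M i j * u r j)). intros j Hj.
apply derivable_pt_lim_scal. apply H; auto. Qed.

Lemma dot_deriv n u w s du dw : vec_deriv n u s du -> vec_deriv n w s dw ->
  derivable_pt_lim (fun r => dot n (u r) (w r)) s (dot n du (w s) + dot n (u s) dw).
Proof. intros Hu Hw. unfold dot. rewrite <- sumR_plus.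
apply (sumR_derive n (fun j r => u r j * w r j)). intros j Hj.
apply (derivable_pt_lim_mult (fun r => u r j) (fun r => w r j)); auto. Qed.

Lemma quad_deriv n P z s dz : sym n P -> vec_deriv n z s dz ->
  derivable_pt_lim (fun r => quad n P (z r)) s (2 * dot n (z s) (mv n P dz)).
Proof. intros HP Hz. unfold quad.
replace (2 * dot n (z s) (mv n P dz)) with (dot n dz (mv n P (z s)) + dot n (z s) (mv n P dz)).
apply dot_deriv; auto. apply mv_deriv; auto.
rewrite (dot_sym_mv n P dz (z s)) by auto. ring. Qed.

Lemma mvF n m A B K v i :
  mv n (madd A (mm m B K)) v i = mv n A v i + mv m B (mv n K v) i.
Proof. rewrite <- mv_mm. unfold mv, madd. rewrite <- sumR_plus. apply sumR_ext; intros; ring. Qed.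

Lemma sumR_opp n f : sumR n (fun k => - f k) = - sumR n f.
Proof. induction n; simpl; [lra|]. rewrite IHn; lra. Qed.

Lemma lyap_id n F P Q v : sym n P ->
  (forall i j, (i < n)%nat -> (j < n)%nat ->
     mm n (trans F) P i j + mm n P F i j = - Q i j) ->
  2 * dot n v (mv n P (mv n F v)) = - quad n Q v.
Proof. intros HP HL. unfold quad.
assert (E: forall i, (i<n)%nat -> mv n Q v i = - (mv n (trans F) (mv n P v) i + mv n P (mv n F v) i)).
{ intros i Hi. rewrite <- !mv_mm. unfold mv.
  transitivity (- sumR n (fun j => (mm n (trans F) P i j + mm n P F i j) * v j)).
  transitivity (sumR n (fun j => - ((mm n (trans F) P i j + mm n P F i j) * v j))).
  apply sumR_ext; intros j Hj. rewrite HL by auto. ring.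
  apply sumR_opp.
  rewrite <- sumR_plus. f_equal. apply sumR_ext; intros; ring. }
rewrite (dot_ext n v (mv n Q v) v (fun i => (-1) * mv n (trans F) (mv n P v) i + (-1) * mv n P (mv n F v) i)).
2:{ intros j Hj. split; auto. rewrite E by auto. ring. }
rewrite dot_lin2. rewrite dot_trans.
rewrite (dot_sym_mv n P v (mv n F v)) by auto.
rewrite (dot_comm n (mv n P v) (mv n F v)). ring. Qed.

Lemma mul_np a b : a <= 0 -> 0 <= b -> a * b <= 0.
Proof. intros; nra. Qed.

Lemma mono_nonincr h h' a s : a <= s ->
  (forall r, a <= r <= s -> derivable_pt_lim h r (h' r)) ->
  (forall r, a < r < s -> h' r <= 0) -> h s <= h a.
Proof. intros Has Hd Hn. destruct (Req_dec a s) as [<-|Hne]. lra.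
destruct (MVT_cor2 h h' a s) as [c [Hc1 Hc2]]; [lra|auto|].
assert (h' c <= 0) by (apply Hn; lra).
assert (h' c * (s - a) <= 0) by (apply mul_np; lra). lra. Qed.

Lemma strict_incr h h' a s : a < s ->
  (forall r, a <= r <= s -> derivable_pt_lim h r (h' r)) ->
  (forall r, a < r < s -> 0 < h' r) -> h a < h s.
Proof. intros Has Hd Hn.
destruct (MVT_cor2 h h' a s) as [c [Hc1 Hc2]]; [lra|auto|].
assert (0 < h' c) by (apply Hn; lra).
assert (0 < h' c * (s - a)) by (apply Rmult_lt_0_compat; lra). lra. Qed.

Lemma expw_deriv f t l c a : derivable_pt_lim f t l ->
  derivable_pt_lim (fun r => f r * exp (c * (r - a))) t ((l + c * f t) * exp (c * (t - a))).
Proof. intros H.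
assert (He: derivable_pt_lim (fun r => exp (c * (r - a))) t (exp (c * (t - a)) * c)).
{ assert (Hin: derivable_pt_lim (fun r => c * (r - a)) t c).
  { pose proof (derivable_pt_lim_minus id (fun _ => a) t 1 0 (derivable_pt_lim_id t) (derivable_pt_lim_const a t)) as H1.
    pose proof (derivable_pt_lim_scal _ c t _ H1) as H2.
    replace (c * (1 - 0)) with c in H2 by ring. exact H2. }
  pose proof (derivable_pt_lim_comp _ exp t c _ Hin (derivable_pt_lim_exp _)) as H'.
  unfold comp in H'. exact H'. }
replace ((l + c * f t) * exp (c * (t - a))) with (l * exp (c * (t - a)) + f t * (exp (c * (t - a)) * c)) by ring.
apply (derivable_pt_lim_mult f (fun r => exp (c * (r - a)))); auto. Qed.

Lemma decay_lemma W W' c a b :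
  (forall s, derivable_pt_lim W s (W' s)) ->
  (forall s, a <= s <= b -> W' s <= - c * W s) ->
  forall s, a <= s <= b -> W s <= W a * exp (- c * (s - a)).
Proof. intros Hd Hb s Hs.
pose proof (mono_nonincr (fun r => W r * exp (c * (r - a)))
  (fun r => (W' r + c * W r) * exp (c * (r - a))) a s) as H.
simpl in H. replace (c * (a - a)) with 0 in H by ring. rewrite exp_0 in H.
assert (W s * exp (c * (s - a)) <= W a * 1).
{ apply H. lra. intros r _; apply (expw_deriv W); auto.
  intros r Hr. assert (W' r + c * W r <= 0) by (pose proof (Hb r); lra).
  assert (0 < exp (c * (r - a))) by apply exp_pos. nra. }
assert (E: W s = W s * exp (c * (s - a)) * exp (- c * (s - a))).
{ rewrite Rmult_assoc, <- exp_plus. replace (c * (s - a) + - c * (s - a)) with 0 by ring.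
  rewrite exp_0; ring. }
rewrite E. apply Rmult_le_compat_r. apply Rlt_le, exp_pos. lra. Qed.

Lemma grow_lemma E E' al be a :
  0 < al -> E a = 0 ->
  (forall s, derivable_pt_lim E s (E' s)) ->
  (forall s, a <= s -> E' s <= al * E s + be) ->
  forall s, a <= s -> E s <= be / al * (exp (al * (s - a)) - 1).
Proof. intros Hal Ha Hd Hb s Hs.
pose proof (mono_nonincr (fun r => (E r + be / al) * exp (- al * (r - a)))
  (fun r => (E' r + 0 + - al * (E r + be/al)) * exp (- al * (r - a))) a s) as H.
simpl in H. replace (- al * (a - a)) with 0 in H by ring. rewrite exp_0, Ha in H.
assert (H2: (E s + be/al) * exp (- al * (s - a)) <= (0 + be/al) * 1).
{ apply H. lra. intros r _; apply (expw_deriv (fun q => E q + be/al)).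
  apply (derivable_pt_lim_plus E (fun _ => be/al) r (E' r) 0). auto. apply derivable_pt_lim_const.
  intros r Hr. assert (E' r + 0 + - al * (E r + be/al) <= 0).
  { pose proof (Hb r). replace (- al * (E r + be/al)) with (- al * E r - be) by (field; lra). lra. }
  assert (0 < exp (- al * (r - a))) by apply exp_pos. nra. }
assert (E2: E s + be/al = (E s + be/al) * exp (- al * (s - a)) * exp (al * (s - a))).
{ rewrite Rmult_assoc, <- exp_plus. replace (- al * (s - a) + al * (s - a)) with 0 by ring.
  rewrite exp_0; ring. }
assert (E s + be/al <= be/al * exp (al * (s - a))).
{ rewrite E2. apply Rmult_le_compat_r. apply Rlt_le, exp_pos. lra. }
lra. Qed.

Lemma pos_growth z G lam a s : a < s -> 0 <= z a ->
  (forall r, derivable_pt_lim z r (- lam * z r + G r)) ->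
  (forall r, a < r < s -> 0 < G r) -> 0 < z s.
Proof. intros Has Ha Hd HG.
pose proof (strict_incr (fun r => z r * exp (lam * (r - a)))
  (fun r => ((- lam * z r + G r) + lam * z r) * exp (lam * (r - a))) a s Has) as H.
simpl in H. replace (lam * (a - a)) with 0 in H by ring. rewrite exp_0 in H.
assert (H2: z a * 1 < z s * exp (lam * (s - a))).
{ apply H. intros r _; apply (expw_deriv z); auto.
  intros r Hr. assert (0 < exp (lam * (r - a))) by apply exp_pos.
  replace (- lam * z r + G r + lam * z r) with (G r) by ring.
  apply Rmult_lt_0_compat; auto. }
assert (0 < exp (lam * (s - a))) by apply exp_pos.
destruct (Rle_dec (z s) 0); [|lra].
assert (z s * exp (lam * (s - a)) <= 0) by (apply mul_np; lra). lra. Qed.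

Lemma nonneg_lemma z G lam theta a b : 0 <= theta -> 0 <= z a -> a <= b ->
  (forall r, derivable_pt_lim z r (- lam * z r + G r)) ->
  (forall s, a < s < b -> 0 < z s + theta * G s) ->
  forall s, a <= s <= b -> 0 <= z s.
Proof. intros Ht Ha Hab Hd Hp s Hs.
destruct (Req_dec s a) as [->|Hsa]; [lra|].
destruct (Req_dec theta 0) as [Ht0|Ht0].
- subst theta.
  destruct (Req_dec s b) as [->|Hsb].
  2:{ pose proof (Hp s). lra. }
  destruct (Rle_dec 0 (z b)) as [|Hneg]; auto. exfalso.
  assert (Hc: continuity_pt z b) by (apply derivable_continuous_pt; exists (- lam * z b + G b); apply Hd).
  destruct (Hc (- z b)) as [del [Hdel Hc2]]. lra.
  set (r := b - Rmin del (b - a) / 2).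
  assert (Hm1: 0 < Rmin del (b - a)) by (apply Rmin_glb_lt; lra).
  assert (Hm2: Rmin del (b - a) <= del) by apply Rmin_l.
  assert (Hm3: Rmin del (b - a) <= b - a) by apply Rmin_r.
  assert (Hr: a < r < b) by (unfold r; lra).
  pose proof (Hp r Hr).
  assert (R_dist r b < del).
  { unfold R_dist. rewrite Rabs_left by lra. unfold r; lra. }
  assert (Hzz: R_dist (z r) (z b) < - z b) by (apply Hc2; split; [unfold D_x, no_cond; split; [auto|lra] | auto]).
  unfold R_dist in Hzz. pose proof (Rle_abs (z r - z b)). lra.
- assert (Htp: 0 < theta) by lra.
  set (c := lam + / theta).
  pose proof (strict_incr (fun r => z r * exp (c * (r - a)))
    (fun r => ((- lam * z r + G r) + c * z r) * exp (c * (r - a))) a s) as H.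
  simpl in H. replace (c * (a - a)) with 0 in H by ring. rewrite exp_0 in H.
  assert (H2: z a * 1 < z s * exp (c * (s - a))).
  { apply H. lra. intros r _; apply (expw_deriv z); auto.
    intros r Hr. assert (0 < exp (c * (r - a))) by apply exp_pos.
    apply Rmult_lt_0_compat; auto.
    replace (- lam * z r + G r + c * z r) with ((z r + theta * G r) / theta) by (unfold c; field; lra).
    apply Rdiv_lt_0_compat; auto. apply Hp; lra. }
  assert (0 < exp (c * (s - a))) by apply exp_pos.
  destruct (Rle_dec 0 (z s)); auto.
  assert (z s * exp (c * (s - a)) <= 0) by (apply mul_np; lra). lra. Qed.

Definition gfun n m (P Q B K : mat) sigma (xi v : vec) : R :=
  sigma * quad n Q v - 2 * dot n v (mv n P (mv m B (mv n K (vsub xi v)))).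

Lemma nrm_opp n u : nrm n (fun k => - u k) = nrm n u.
Proof. unfold nrm, dot. apply sumR_ext; intros; ring. Qed.

Lemma exp_le a b : a <= b -> exp a <= exp b.
Proof. intros H. destruct (Req_dec a b) as [->|]; [lra|]. apply Rlt_le, exp_increasing; lra. Qed.

Lemma e_deriv n m A B K xi z s :
  vec_deriv n z s (vadd (mv n A (z s)) (mv m B (mv n K xi))) ->
  vec_deriv n (fun r => vsub xi (z r)) s (fun k => - (vadd (mv n A (z s)) (mv m B (mv n K xi)) k)).
Proof. intros H k Hk. unfold vsub.
pose proof (derivable_pt_lim_minus (fun _ => xi k) (fun r => z r k) s 0 _ (derivable_pt_lim_const (xi k) s) (H k Hk)) as H2.
replace (0 - vadd (mv n A (z s)) (mv m B (mv n K xi)) k) with (- vadd (mv n A (z s)) (mv m B (mv n K xi)) k) in H2 by ring.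
exact H2. Qed.

Lemma dwell_lemma n m (A B K P Q : mat) sigma : sym n Q -> pos_def n Q -> 0 < sigma ->
  exists tau, 0 < tau /\ forall xi z a, vnonzero n xi -> z a = xi ->
    (forall s, vec_deriv n z s (vadd (mv n A (z s)) (mv m B (mv n K xi)))) ->
    forall s, a <= s <= a + tau -> 0 < gfun n m P Q B K sigma xi (z s).
Proof. intros HQs HQp Hsig.
destruct (coercive n Q HQs HQp) as [muQ [HmuQ HcQ]].
destruct (mv_bound n n A) as [CA [HCA HA]].
destruct (mv_bound n m K) as [CK [HCK HK]].
destruct (mv_bound m n B) as [CB [HCB HB]].
destruct (mv_bound n n P) as [CP [HCP HP]].
assert (HBK: forall v, nrm n (mv m B (mv n K v)) <= CB * CK * nrm n v).
{ intros v. pose proof (HB (mv n K v)). pose proof (HK v).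
  assert (CB * nrm m (mv n K v) <= CB * (CK * nrm n v)) by (apply Rmult_le_compat_l; auto). lra. }
assert (HPBK: forall v, nrm n (mv n P (mv m B (mv n K v))) <= CP * (CB * CK) * nrm n v).
{ intros v. pose proof (HP (mv m B (mv n K v))). pose proof (HBK v).
  assert (CP * nrm n (mv m B (mv n K v)) <= CP * (CB * CK * nrm n v)) by (apply Rmult_le_compat_l; auto). lra. }
set (CBK := CB * CK). assert (HCBK: 0 <= CBK) by (unfold CBK; apply Rmult_le_pos; auto).
set (CPBK := CP * CBK). assert (HCPBK: 0 <= CPBK) by (unfold CPBK; apply Rmult_le_pos; auto).
set (al := 1 + 4 * CA). set (be := 4 * CA + 2 * CBK).
assert (Hal: 0 < al) by (unfold al; lra). assert (Hbe: 0 <= be) by (unfold be; lra).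
set (d := sigma * muQ / 2). assert (Hd: 0 < d) by (unfold d; nra).
set (L := sigma * muQ / 2 + CPBK / d).
assert (HL: 0 < L). { unfold L. assert (0 <= CPBK / d) by (apply Rmult_le_pos; [lra| apply Rlt_le, Rinv_0_lt_compat; lra]). nra. }
set (eps := (sigma * muQ / 8) / L). assert (Heps: 0 < eps) by (unfold eps; apply Rdiv_lt_0_compat; nra).
set (y := 1 + eps * al / (be + 1)).
assert (Hy: 1 < y). { unfold y. assert (0 < eps * al / (be + 1)) by (apply Rdiv_lt_0_compat; nra). lra. }
exists (ln y / al). split.
{ apply Rdiv_lt_0_compat; auto. rewrite <- ln_1. apply ln_increasing; lra. }
intros xi z a Hxi Hza Hz s Hs.
set (X0 := nrm n xi). assert (HX0: 0 < X0) by (apply nrm_pos; auto).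
set (E := fun r => nrm n (vsub xi (z r))).
assert (HE: forall r, a <= r -> E r <= (be * X0) / al * (exp (al * (r - a)) - 1)).
{ apply (grow_lemma E (fun r => 2 * dot n (vsub xi (z r)) (fun k => - (vadd (mv n A (z r)) (mv m B (mv n K xi)) k))) al (be * X0) a Hal).
  - unfold E. rewrite Hza. unfold nrm, dot, vsub. transitivity (sumR n (fun _ => 0)).
    apply sumR_ext; intros; ring. apply sumR_zero.
  - intros r. unfold E, nrm.
    pose proof (dot_deriv n _ _ r _ _ (e_deriv n m A B K xi z r (Hz r)) (e_deriv n m A B K xi z r (Hz r))) as H.
    replace (2 * dot n (vsub xi (z r)) (fun k => - vadd (mv n A (z r)) (mv m B (mv n K xi)) k))
      with (dot n (fun k => - vadd (mv n A (z r)) (mv m B (mv n K xi)) k) (vsub xi (z r)) +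
            dot n (vsub xi (z r)) (fun k => - vadd (mv n A (z r)) (mv m B (mv n K xi)) k))
      by (rewrite dot_comm; ring).
    exact H.
  - intros r _. set (e := vsub xi (z r)).
    set (de := fun k => - vadd (mv n A (z r)) (mv m B (mv n K xi)) k).
    pose proof (dot2_le n e de 1 Rlt_0_1) as H1.
    assert (H2: nrm n de <= 2 * nrm n (mv n A (z r)) + 2 * nrm n (mv m B (mv n K xi))).
    { rewrite <- (nrm_opp n (mv n A (z r))), <- (nrm_opp n (mv m B (mv n K xi))).
      apply nrm_add. intros j _. unfold de, vadd. ring. }
    assert (H3: nrm n (z r) <= 2 * X0 + 2 * nrm n e).
    { unfold X0. rewrite <- (nrm_opp n e). apply nrm_add. intros j _. unfold e, vsub. ring. }
    pose proof (HA (z r)). pose proof (HBK xi).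
    assert (CA * nrm n (z r) <= CA * (2 * X0 + 2 * nrm n e)) by (apply Rmult_le_compat_l; auto).
    fold CBK in H0. fold X0 in H0. change (E r) with (nrm n e). unfold al, be.
    assert (nrm n de / 1 = nrm n de) by field. lra. }
assert (Hexp: exp (al * (s - a)) <= y).
{ rewrite <- (exp_ln y) by lra. apply exp_le.
  assert (al * (s - a) <= al * (ln y / al)) by (apply Rmult_le_compat_l; lra).
  replace (al * (ln y / al)) with (ln y) in H by (field; lra). lra. }
assert (HEs: E s <= eps * X0).
{ pose proof (HE s ltac:(lra)) as H.
  assert (be * X0 / al * (exp (al * (s - a)) - 1) <= be * X0 / al * (y - 1)).
  { apply Rmult_le_compat_l. apply Rmult_le_pos. nra. apply Rlt_le, Rinv_0_lt_compat; lra. lra. }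
  assert (be * X0 / al * (y - 1) = eps * X0 * (be / (be + 1))) by (unfold y; field; lra).
  assert (be / (be + 1) <= 1).
  { apply (Rmult_le_reg_r (be + 1)). lra. replace (be / (be + 1) * (be + 1)) with be by (field; lra). lra. }
  assert (eps * X0 * (be / (be + 1)) <= eps * X0 * 1) by (apply Rmult_le_compat_l; nra).
  lra. }
unfold gfun. set (zs := z s). set (e := vsub xi zs).
change (E s) with (nrm n e) in HEs.
set (w := mv n P (mv m B (mv n K e))).
pose proof (HcQ zs) as Hq.
pose proof (dot2_le n zs w d Hd) as Hb.
pose proof (HPBK e) as Hw. fold w in Hw. fold CBK CPBK in Hw.
assert (Hx: X0 <= 2 * nrm n zs + 2 * nrm n e).
{ unfold X0. apply nrm_add. intros j _. unfold e, vsub. ring. }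
assert (Hwd: nrm n w / d <= CPBK / d * nrm n e).
{ unfold Rdiv. rewrite (Rmult_comm CPBK), Rmult_assoc, (Rmult_comm (/d)).
  apply Rmult_le_compat_r. apply Rlt_le, Rinv_0_lt_compat; lra. lra. }
assert (Hsq: sigma * (muQ * nrm n zs) <= sigma * quad n Q zs) by (apply Rmult_le_compat_l; lra).
assert (Hd2: d * nrm n zs = sigma * muQ / 2 * nrm n zs) by reflexivity.
assert (Hg: sigma * quad n Q zs - 2 * dot n zs w >= sigma * muQ / 4 * X0 - L * nrm n e).
{ unfold L. assert (sigma * muQ / 2 * nrm n zs >= sigma * muQ / 4 * X0 - sigma * muQ / 2 * nrm n e).
  { assert (0 < sigma * muQ) by nra.
    assert (sigma * muQ / 4 * X0 <= sigma * muQ / 4 * (2 * nrm n zs + 2 * nrm n e)) by (apply Rmult_le_compat_l; lra).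
    lra. }
  assert (sigma * (muQ * nrm n zs) = sigma * muQ * nrm n zs) by ring.
  lra. }
assert (L * nrm n e <= L * (eps * X0)) by (apply Rmult_le_compat_l; lra).
assert (L * (eps * X0) = sigma * muQ / 8 * X0) by (unfold eps; field; lra).
assert (0 < sigma * muQ / 8 * X0) by (apply Rmult_lt_0_compat; nra).
lra. Qed.

Lemma W_deriv n m (A B K P Q : mat) lam sigma xi z zeta s :
  sym n P ->
  (forall i j, (i < n)%nat -> (j < n)%nat ->
     mm n (trans (madd A (mm m B K))) P i j + mm n P (madd A (mm m B K)) i j = - Q i j) ->
  (forall r, vec_deriv n z r (vadd (mv n A (z r)) (mv m B (mv n K xi)))) ->
  (forall r, derivable_pt_lim zeta r
      (- lam * zeta r + sigma * quad n Q (z r)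
       - 2 * dot n (z r) (mv n P (mv m B (mv n K (vsub xi (z r))))))) ->
  derivable_pt_lim (fun r => quad n P (z r) + zeta r) s
    (- (1 - sigma) * quad n Q (z s) - lam * zeta s).
Proof. intros HP HL Hz Hzeta.
set (F := madd A (mm m B K)).
set (e := vsub xi (z s)).
set (bb := dot n (z s) (mv n P (mv m B (mv n K e)))).
assert (Hid: 2 * dot n (z s) (mv n P (vadd (mv n A (z s)) (mv m B (mv n K xi)))) = - quad n Q (z s) + 2 * bb).
{ rewrite (dot_ext n (z s) (mv n P (vadd (mv n A (z s)) (mv m B (mv n K xi))))
      (z s) (fun i => 1 * mv n P (mv n F (z s)) i + 1 * mv n P (mv m B (mv n K e)) i)).
  - rewrite dot_lin2. rewrite <- (lyap_id n F P Q (z s) HP HL). unfold bb. ring.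
  - intros j Hj. split; auto. rewrite <- mv_lin. apply mv_ext. intros l Hl.
    unfold vadd, F. rewrite mvF.
    rewrite (mv_ext m B (mv n K xi) (fun q => 1 * mv n K (z s) q + 1 * mv n K e q)).
    2:{ intros q _. rewrite <- mv_lin. apply mv_ext. intros; unfold e, vsub; ring. }
    rewrite mv_lin. ring. }
pose proof (derivable_pt_lim_plus _ _ s _ _ (quad_deriv n P z s _ HP (Hz s)) (Hzeta s)) as H.
rewrite Hid in H. fold e in H. fold bb in H.
replace (- (1 - sigma) * quad n Q (z s) - lam * zeta s) with
  (- quad n Q (z s) + 2 * bb + (- lam * zeta s + sigma * quad n Q (z s) - 2 * bb)) by ring.
exact H. Qed.

Lemma interval_lemma n m (A B K P Q : mat) kappa lam sigma theta c xi z zeta a b :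
  sym n P ->
  (forall i j, (i < n)%nat -> (j < n)%nat ->
     mm n (trans (madd A (mm m B K))) P i j + mm n P (madd A (mm m B K)) i j = - Q i j) ->
  (forall v, kappa * quad n P v <= quad n Q v) ->
  (forall v, 0 <= quad n P v) ->
  0 < sigma < 1 -> 0 <= theta -> 0 < c -> c <= (1 - sigma) * kappa -> c <= lam ->
  (forall r, vec_deriv n z r (vadd (mv n A (z r)) (mv m B (mv n K xi)))) ->
  (forall r, derivable_pt_lim zeta r
      (- lam * zeta r + sigma * quad n Q (z r)
       - 2 * dot n (z r) (mv n P (mv m B (mv n K (vsub xi (z r))))))) ->
  0 <= zeta a -> a <= b ->
  (forall s, a < s < b -> 0 < zeta s + theta * gfun n m P Q B K sigma xi (z s)) ->
  forall s, a <= s <= b -> 0 <= zeta s /\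
    quad n P (z s) + zeta s <= (quad n P (z a) + zeta a) * exp (- c * (s - a)).
Proof. intros HP HL Hk HV Hsig Ht Hc Hc1 Hc2 Hz Hzeta Ha Hab Htr.
assert (Hnn: forall s, a <= s <= b -> 0 <= zeta s).
{ apply (nonneg_lemma zeta (fun r => gfun n m P Q B K sigma xi (z r)) lam theta a b Ht Ha Hab).
  intros r. unfold gfun.
  replace (- lam * zeta r + (sigma * quad n Q (z r) - 2 * dot n (z r) (mv n P (mv m B (mv n K (vsub xi (z r)))))))
    with (- lam * zeta r + sigma * quad n Q (z r) - 2 * dot n (z r) (mv n P (mv m B (mv n K (vsub xi (z r)))))) by ring.
  apply Hzeta. exact Htr. }
intros s Hs. split. apply Hnn; auto.
apply (decay_lemma (fun r => quad n P (z r) + zeta r)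
   (fun r => - (1 - sigma) * quad n Q (z r) - lam * zeta r) c a b); auto.
- intros r. apply (W_deriv n m A B K P Q lam sigma xi z zeta r HP HL Hz Hzeta).
- intros r Hr. pose proof (Hnn r Hr). pose proof (Hk (z r)). pose proof (HV (z r)).
  assert (((1 - sigma) * kappa - c) * quad n P (z r) >= 0) by (apply Rle_ge, Rmult_le_pos; lra).
  assert ((lam - c) * zeta r >= 0) by (apply Rle_ge, Rmult_le_pos; lra).
  assert ((1 - sigma) * (kappa * quad n P (z r)) <= (1 - sigma) * quad n Q (z r)) by (apply Rmult_le_compat_l; lra).
  lra. Qed.

Lemma inI_pred Ifin i : inI Ifin (S i) -> inI Ifin i.
Proof. destruct Ifin; simpl; auto. lia. Qed.

Lemma inI_0 Ifin : inI Ifin 0.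
Proof. destruct Ifin; simpl; auto. lia. Qed.

Lemma trig_g n m P Q B K sigma theta xi zt et :
  trig n m P Q B K sigma theta xi zt et = et + theta * gfun n m P Q B K sigma xi zt.
Proof. reflexivity. Qed.

Lemma global n m (A B K P Q : mat) kappa lam sigma theta c tau :
  sym n P ->
  (forall i j, (i < n)%nat -> (j < n)%nat ->
     mm n (trans (madd A (mm m B K))) P i j + mm n P (madd A (mm m B K)) i j = - Q i j) ->
  (forall v, kappa * quad n P v <= quad n Q v) ->
  (forall v, 0 <= quad n P v) ->
  0 < sigma < 1 -> 0 <= theta -> 0 < c -> c <= (1 - sigma) * kappa -> c <= lam -> 0 < tau ->
  (forall xi z a, vnonzero n xi -> z a = xi ->
    (forall s, vec_deriv n z s (vadd (mv n A (z s)) (mv m B (mv n K xi)))) ->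
    forall s, a <= s <= a + tau -> 0 < gfun n m P Q B K sigma xi (z s)) ->
  forall x eta t Ifin z zeta,
    is_execution n m A B K P Q lam sigma theta x eta t Ifin z zeta ->
    (forall i, inI Ifin i -> vnonzero n (x (t i))) ->
    (forall i, inI Ifin i -> inI Ifin (S i) -> tau <= t (S i) - t i) /\
    (forall s, 0 <= s -> 0 <= eta s /\
        quad n P (x s) + eta s <= quad n P (x 0) * exp (- c * s)).
Proof. intros HP HL Hk HV Hsig Ht Hc Hc1 Hc2 Htau Hdw x eta t Ifin z zeta Hex Hnz.
destruct Hex as [Ht0 [He0 [Hflow [Hmid Hlast]]]].
set (W := fun s => quad n P (x s) + eta s).
assert (Hstep: forall i, inI Ifin i -> inI Ifin (S i) -> 0 <= eta (t i) ->
   t i + tau <= t (S i) /\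
   forall s, t i <= s <= t (S i) -> 0 <= eta s /\ W s <= W (t i) * exp (- c * (s - t i))).
{ intros i Hi HSi He.
  destruct (Hflow i Hi) as [Hz0 [Hzeta0 [Hz Hzeta]]].
  destruct (Hmid i Hi HSi) as [[Hglb1 Hglb2] Hagree].
  pose proof (Hdw (x (t i)) (z i) (t i) (Hnz i Hi) Hz0 Hz) as Hg.
  assert (Hz0' : 0 <= zeta i (t i)) by (rewrite Hzeta0; auto).
  assert (Hdwell: t i + tau <= t (S i)).
  { apply Hglb2. intros s [Hs1 Hs2]. destruct (Rle_dec (t i + tau) s) as [|Hlt]; auto. exfalso.
    rewrite trig_g in Hs2.
    assert (0 < zeta i s).
    { apply (pos_growth (zeta i) (fun r => gfun n m P Q B K sigma (x (t i)) (z i r)) lam (t i) s Hs1 Hz0').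
      - intros r. unfold gfun.
        replace (- lam * zeta i r + (sigma * quad n Q (z i r) - 2 * dot n (z i r) (mv n P (mv m B (mv n K (vsub (x (t i)) (z i r)))))))
          with (- lam * zeta i r + sigma * quad n Q (z i r) - 2 * dot n (z i r) (mv n P (mv m B (mv n K (vsub (x (t i)) (z i r)))))) by ring.
        apply Hzeta.
      - intros r Hr. apply Hg. lra. }
    assert (0 < gfun n m P Q B K sigma (x (t i)) (z i s)) by (apply Hg; lra).
    assert (0 <= theta * gfun n m P Q B K sigma (x (t i)) (z i s)) by (apply Rmult_le_pos; lra).
    lra. }
  split; auto.
  assert (Htr: forall s, t i < s < t (S i) -> 0 < zeta i s + theta * gfun n m P Q B K sigma (x (t i)) (z i s)).
  { intros s Hs. destruct (Rlt_dec 0 (zeta i s + theta * gfun n m P Q B K sigma (x (t i)) (z i s))) as [|Hn]; auto.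
    exfalso. assert (t (S i) <= s). { apply Hglb1. split. lra. rewrite trig_g. lra. } lra. }
  intros s Hs.
  pose proof (interval_lemma n m A B K P Q kappa lam sigma theta c (x (t i)) (z i) (zeta i) (t i) (t (S i))
     HP HL Hk HV Hsig Ht Hc Hc1 Hc2 Hz Hzeta Hz0' ltac:(lra) Htr s Hs) as [H1 H2].
  destruct (Hagree s Hs) as [Hx1 Hx2]. unfold W. rewrite Hx1, Hx2, <- Hz0, <- Hzeta0.
  split; auto. }
assert (Hlastl: forall i, inI Ifin i -> ~ inI Ifin (S i) -> 0 <= eta (t i) ->
   forall s, t i <= s -> 0 <= eta s /\ W s <= W (t i) * exp (- c * (s - t i))).
{ intros i Hi HSi He s Hs.
  destruct (Hflow i Hi) as [Hz0 [Hzeta0 [Hz Hzeta]]].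
  destruct (Hlast i Hi HSi) as [Hnt Hagree].
  assert (Hz0' : 0 <= zeta i (t i)) by (rewrite Hzeta0; auto).
  assert (Htr: forall r, t i < r < s -> 0 < zeta i r + theta * gfun n m P Q B K sigma (x (t i)) (z i r)).
  { intros r Hr. pose proof (Hnt r ltac:(lra)) as Hn. rewrite trig_g in Hn. lra. }
  pose proof (interval_lemma n m A B K P Q kappa lam sigma theta c (x (t i)) (z i) (zeta i) (t i) s
     HP HL Hk HV Hsig Ht Hc Hc1 Hc2 Hz Hzeta Hz0' Hs Htr s ltac:(lra)) as [H1 H2].
  destruct (Hagree s Hs) as [Hx1 Hx2]. unfold W. rewrite Hx1, Hx2, <- Hz0, <- Hzeta0.
  split; auto. }
set (W0 := quad n P (x 0)).
assert (HW0: W 0 = W0) by (unfold W, W0; rewrite He0; ring).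
assert (Hinv: forall i, inI Ifin i -> 0 <= eta (t i) /\ W (t i) <= W0 * exp (- c * t i) /\ INR i * tau <= t i).
{ induction i as [|i IH]; intros Hi.
  - rewrite Ht0, He0. simpl. rewrite HW0. replace (- c * 0) with 0 by ring. rewrite exp_0. lra.
  - destruct (IH (inI_pred _ _ Hi)) as [He [HWi Hti]].
    destruct (Hstep i (inI_pred _ _ Hi) Hi He) as [Hd Hs].
    destruct (Hs (t (S i)) ltac:(lra)) as [He' HW'].
    split; auto. split.
    + assert (W (t i) * exp (- c * (t (S i) - t i)) <= W0 * exp (- c * t i) * exp (- c * (t (S i) - t i)))
        by (apply Rmult_le_compat_r; [apply Rlt_le, exp_pos | auto]).
      rewrite Rmult_assoc, <- exp_plus in H.
      replace (- c * t i + - c * (t (S i) - t i)) with (- c * t (S i)) in H by ring. lra.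
    + rewrite S_INR. lra. }
split.
{ intros i Hi HSi. destruct (Hinv i Hi) as [He _]. destruct (Hstep i Hi HSi He). lra. }
intros s Hs0.
assert (Hcov: exists i, inI Ifin i /\ t i <= s /\ (inI Ifin (S i) -> s <= t (S i))).
{ assert (Hcl: forall k, (exists i, inI Ifin i /\ t i <= s /\ (inI Ifin (S i) -> s <= t (S i))) \/
                         (inI Ifin k /\ t k <= s)).
  { induction k as [|k IH].
    - right. split. apply inI_0. lra.
    - destruct IH as [IH|[Hk1 Hk2]]. left; auto.
      destruct (Classical_Prop.classic (inI Ifin (S k) /\ t (S k) <= s)) as [Hy|Hy]. right; auto.
      left. exists k. split; auto. split; auto. intros HSk.
      destruct (Rle_dec s (t (S k))); auto. exfalso. apply Hy. split; auto. lra. }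
  destruct (INR_unbounded (s / tau)) as [k Hk'].
  destruct (Hcl k) as [|[Hk1 Hk2]]; auto. exfalso.
  destruct (Hinv k Hk1) as [_ [_ Hkt]].
  assert (s < INR k * tau).
  { apply (Rmult_lt_compat_r tau) in Hk'; auto. unfold Rdiv in Hk'.
    rewrite Rmult_assoc, Rinv_l in Hk' by lra. lra. }
  lra. }
destruct Hcov as [i [Hi [Hts Hst]]].
destruct (Hinv i Hi) as [He [HWi _]].
assert (Hfin: 0 <= eta s /\ W s <= W (t i) * exp (- c * (s - t i))).
{ destruct (Classical_Prop.classic (inI Ifin (S i))) as [HSi|HSi].
  - destruct (Hstep i Hi HSi He) as [_ Hs]. apply Hs. split; auto.
  - apply (Hlastl i Hi HSi He s Hts). }
destruct Hfin as [Hes HWs]. split; auto.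
assert (W (t i) * exp (- c * (s - t i)) <= W0 * exp (- c * t i) * exp (- c * (s - t i)))
  by (apply Rmult_le_compat_r; [apply Rlt_le, exp_pos | auto]).
rewrite Rmult_assoc, <- exp_plus in H.
replace (- c * t i + - c * (s - t i)) with (- c * s) in H by ring.
change (W s <= W0 * exp (- c * s)). lra. Qed.

Lemma exp_small M c d : 0 < c -> 0 <= M -> 0 < d ->
  exists T, 0 <= T /\ forall s, T <= s -> M * exp (- c * s) < d.
Proof. intros Hc HM Hd. exists (M / (d * c)). split.
{ apply Rmult_le_pos; auto. apply Rlt_le, Rinv_0_lt_compat; nra. }
intros s Hs.
assert (Hs0: 0 <= s). { assert (0 <= M / (d * c)) by (apply Rmult_le_pos; auto; apply Rlt_le, Rinv_0_lt_compat; nra). lra. }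
pose proof (exp_ineq1_le (c * s)).
assert (HMs: M <= d * c * s).
{ apply (Rmult_le_compat_l (d * c)) in Hs; [|nra].
  replace (d * c * (M / (d * c))) with M in Hs by (field; lra). lra. }
assert (E: M * exp (- c * s) = M / exp (c * s)).
{ replace (- c * s) with (- (c * s)) by ring. rewrite exp_Ropp. reflexivity. }
rewrite E. assert (0 < exp (c * s)) by apply exp_pos.
apply (Rmult_lt_reg_r (exp (c * s))); auto.
replace (M / exp (c * s) * exp (c * s)) with M by (field; lra).
assert (d * (c * s) < d * exp (c * s)) by (apply Rmult_lt_compat_l; [lra|]; lra).
lra. Qed.

Lemma tends_abs f M c : 0 < c -> 0 <= M ->
  (forall s, 0 <= s -> Rabs (f s) <= M * exp (- c * s)) -> tends_to_0 f.
Proof. intros Hc HM H eps Heps. destruct (exp_small M c eps Hc HM Heps) as [T [HT HT2]].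
exists T. intros s Hs. pose proof (H s ltac:(lra)). pose proof (HT2 s Hs). lra. Qed.

Lemma tends_sq f M c : 0 < c -> 0 <= M ->
  (forall s, 0 <= s -> f s ^2 <= M * exp (- c * s)) -> tends_to_0 f.
Proof. intros Hc HM H eps Heps. destruct (exp_small M c (eps * eps) Hc HM ltac:(nra)) as [T [HT HT2]].
exists T. intros s Hs. pose proof (H s ltac:(lra)). pose proof (HT2 s Hs).
destruct (Rlt_dec (Rabs (f s)) eps) as [|Hn]; auto. exfalso.
assert (eps <= Rabs (f s)) by lra.
assert (f s ^2 = Rabs (f s) * Rabs (f s)) by (rewrite <- Rabs_mult; rewrite Rabs_right; [ring| nra]).
nra. Qed.

Theorem theorem2 (n m : nat) (A B K P Q : mat) (kappa : R) :
  hurwitz n (madd A (mm m B K)) ->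
  sym n P -> pos_def n P -> sym n Q -> pos_def n Q ->
  (forall i j, (i < n)%nat -> (j < n)%nat ->
     mm n (trans (madd A (mm m B K))) P i j + mm n P (madd A (mm m B K)) i j
     = - Q i j) ->
  0 < kappa ->
  (forall v, kappa * quad n P v <= quad n Q v) ->
  forall lam sigma theta : R,
    0 < lam -> 0 < sigma < 1 -> 0 <= theta ->
    exists tau, 0 < tau /\
      forall (x : R -> vec) (eta : R -> R) (t : nat -> R) (Ifin : option nat)
             (z : nat -> R -> vec) (zeta : nat -> R -> R),
        is_execution n m A B K P Q lam sigma theta x eta t Ifin z zeta ->
        (forall i, inI Ifin i -> vnonzero n (x (t i))) ->
        (forall i, inI Ifin i -> inI Ifin (S i) -> tau <= t (S i) - t i) /\
        (forall k, (k < n)%nat -> tends_to_0 (fun s => x s k)) /\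
        tends_to_0 eta /\
        (lam = (1 - sigma) * kappa ->
         forall s, 0 <= s ->
           quad n P (x s) <= quad n P (x 0) * exp ((sigma - 1) * kappa * s)).
Proof.
intros _ HPs HPp HQs HQp HL Hkap Hk lam sigma theta Hlam Hsig Ht.
destruct (dwell_lemma n m A B K P Q sigma HQs HQp (proj1 Hsig)) as [tau [Htau Hdw]].
exists tau. split; auto. intros x eta t Ifin z zeta Hex Hnz.
destruct (coercive n P HPs HPp) as [muP [HmuP HcP]].
assert (HV: forall v, 0 <= quad n P v).
{ intros v. pose proof (HcP v). pose proof (nrm_nonneg n v). nra. }
set (c1 := Rmin ((1 - sigma) * kappa) lam).
assert (Hc1: 0 < c1) by (unfold c1; apply Rmin_glb_lt; nra).
destruct (global n m A B K P Q kappa lam sigma theta c1 tau HPs HL Hk HV Hsig Ht Hc1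
   (Rmin_l _ _) (Rmin_r _ _) Htau Hdw x eta t Ifin z zeta Hex Hnz) as [Hdwell Hdec].
set (W0 := quad n P (x 0)). assert (HW0: 0 <= W0) by apply HV.
split; auto. split.
{ intros k Hk0. apply (tends_sq _ (W0 / muP) c1 Hc1).
  apply Rmult_le_pos; auto. apply Rlt_le, Rinv_0_lt_compat; auto.
  intros s Hs. destruct (Hdec s Hs) as [He HW].
  pose proof (nrm_term n (x s) k Hk0). pose proof (HcP (x s)).
  assert (muP * nrm n (x s) <= W0 * exp (- c1 * s)) by (fold W0 in HW; lra).
  apply (Rmult_le_reg_l muP); auto.
  replace (muP * (W0 / muP * exp (- c1 * s))) with (W0 * exp (- c1 * s)) by (field; lra).
  assert (muP * x s k ^2 <= muP * nrm n (x s)) by (apply Rmult_le_compat_l; lra). lra. }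
split.
{ apply (tends_abs _ W0 c1 Hc1 HW0). intros s Hs. destruct (Hdec s Hs) as [He HW].
  rewrite Rabs_right by lra. pose proof (HV (x s)). fold W0 in HW. lra. }
intros Hl s Hs.
assert (Hlc: lam <= (1 - sigma) * kappa) by lra.
destruct (global n m A B K P Q kappa lam sigma theta lam tau HPs HL Hk HV Hsig Ht Hlam
   Hlc (Rle_refl _) Htau Hdw x eta t Ifin z zeta Hex Hnz) as [_ Hdec2].
destruct (Hdec2 s Hs) as [He HW].
replace ((sigma - 1) * kappa * s) with (- lam * s) by (rewrite Hl; ring). fold W0 in HW. lra. Qed.
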